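(* Let $\mathcal{A}$ be a finite list of elements of $\Gamma=\mathbb{Z}^\ell$ and let $k$ be a positive divisor of $\rho_{\mathcal{A}}$. Then the $k$-constituent of the characteristic quasi-polynomial of $\mathcal{A}$, i.e. the polynomial $f_k(t)$ such that $f_k(q)=\#\mathcal{M}(\mathcal{A};\mathbb{Z}^\ell,\mathbb{Z}/q\mathbb{Z})$ for every positive integer $q\equiv k\pmod{\rho_{\mathcal{A}}}$, satisfies $$f_k(t)=\chi^{\mathbb{Z}/k\mathbb{Z}}_{\mathcal{A}}(t).$$
   Context: $\mathcal{M}(\mathcal{A};\mathbb{Z}^\ell,G)=\mathrm{Hom}(\mathbb{Z}^\ell,G)\smallsetminus\bigcup_{\alpha\in\mathcal{A}}\{\varphi\mid\varphi(\alpha)=0\}\cong\{x\in G^\ell\mid \alpha(x)\ne0\ \forall\alpha\in\mathcal{A}\}$. For a sublist $\mathcal{S}$ (sublists distinguished by index), write $(\mathbb{Z}^\ell/\langle\mathcal{S}\rangle)_{\mathrm{tor}}\simeq\bigoplus_i\mathbb{Z}/d_{\mathcal{S},i}\mathbb{Z}$ with $d_{\mathcal{S},i}\mid d_{\mathcal{S},i+1}$; $\rho_{\mathcal{A}}$ is the lcm of the largest such $d_{\mathcal{S},i}$ over all $\mathcal{S}\subset\mathcal{A}$. It is known (Kamiya–Takemura–Terao) that $q\mapsto\#\mathcal{M}(\mathcal{A};\mathbb{Z}^\ell,\mathbb{Z}/q\mathbb{Z})$ is a quasi-polynomial with period $\rho_{\mathcal{A}}$, so the polynomials $f_k$ exist.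 $r_{\mathcal{S}}$ is the rank of $\langle\mathcal{S}\rangle$, $m(\mathcal{S};G)=\#\mathrm{Hom}((\mathbb{Z}^\ell/\langle\mathcal{S}\rangle)_{\mathrm{tor}},G)$ and $\chi^G_{\mathcal{A}}(t)=\sum_{\mathcal{S}\subset\mathcal{A}}(-1)^{\#\mathcal{S}}m(\mathcal{S};G)t^{\ell-r_{\mathcal{S}}}$. *)

(* Defs.v *)
From HB Require Import structures.
From mathcomp Require Import all_boot all_order all_algebra.
Set Implicit Arguments. Unset Strict Implicit. Unset Printing Implicit Defensive.
Import Order.TTheory GRing.Theory Num.Theory.

Local Open Scope ring_scope.

(* An element alpha of Gamma = Z^l is a row vector 'rV[int]_l; the list A is a
   seq of such vectors; sublists S are subsets of the index set 'I_(size A). *)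

(* #M(A; Z^l, Z/qZ): Hom(Z^l, Z/qZ) = (Z/qZ)^l, with Z/qZ represented by
   {0,...,q-1} = 'I_q; alpha(x) = sum_i alpha_i x_i must be nonzero mod q. *)
Definition Mcount (l : nat) (A : seq 'rV[int]_l) (q : nat) : nat :=
  #|[set x : {ffun 'I_l -> 'I_q} |
      all (fun a : 'rV[int]_l => ~~ (q%:Z %| \sum_(i < l) a 0 i * (x i : nat)%:Z)%Z) A]|.

(* The matrix whose rows are the elements of the sublist S (other rows zero;
   zero rows do not change the generated subgroup <S>). *)
Definition subA (l : nat) (A : seq 'rV[int]_l) (S : {set 'I_(size A)}) :
  'M[int]_(size A, l) :=
  \matrix_(i, j) (if i \in S then (nth 0 A i) 0 j else 0).
Arguments subA {l} A S.

Definition smith_diag m n (M : 'M[int]_(m, n)) : seq int :=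
  match int_Smith_normal_form M with
  | existT2 _ _ (existT2 _ _ (exist2 d _ _)) => d
  end.

(* Torsion invariants d_{S,1} | d_{S,2} | ... of (Z^l / <S>)_tor:
   the nonzero invariant factors (in absolute value) of the matrix of S. *)
Definition tor_inv (l : nat) (A : seq 'rV[int]_l) (S : {set 'I_(size A)}) : seq nat :=
  [seq `|x|%N | x <- take (minn (size A) l) (smith_diag (subA A S)) & x != 0].
Arguments tor_inv {l} A S.

Definition rankS (l : nat) (A : seq 'rV[int]_l) (S : {set 'I_(size A)}) : nat :=
  \rank (map_mx (intr : int -> rat) (subA A S)).
Arguments rankS {l} A S.

Definition rhoA (l : nat) (A : seq 'rV[int]_l) : nat :=
  \big[lcmn/1%N]_(S : {set 'I_(size A)}) last 1%N (tor_inv A S).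

(* m(S; Z/kZ) = #Hom((Z^l/<S>)_tor, Z/kZ) with (Z^l/<S>)_tor = (+)_i Z/d_i:
   a homomorphism is a choice of images y_i in Z/kZ with d_i y_i = 0. *)
Definition mS (l : nat) (A : seq 'rV[int]_l) (S : {set 'I_(size A)}) (k : nat) : nat :=
  let d := tor_inv A S in
  #|[set y : {ffun 'I_(size d) -> 'I_k} |
      [forall i : 'I_(size d), (k %| nth 0 d i * y i)%N]]|.
Arguments mS {l} A S k.

Definition chiA (l : nat) (A : seq 'rV[int]_l) (k : nat) : {poly int} :=
  \sum_(S : {set 'I_(size A)})
     ((-1) ^+ #|S| * (mS A S k)%:R) *: 'X^(l - rankS A S).

(* Main.v *)
Require Import Defs.
From HB Require Import structures.
From mathcomp Require Import all_boot all_order all_algebra.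
From mathcomp Require Import zify ring.
Set Implicit Arguments. Unset Strict Implicit. Unset Printing Implicit Defensive.
Import Order.TTheory GRing.Theory Num.Theory.
Lemma card_mult (q c : nat) : (0 < q)%N -> (c %| q)%N ->
  #|[pred t : 'I_q | (c %| t)%N]| = (q %/ c)%N.
Proof.
move=> q0 cq.
rewrite -sum1_card big_mkcond /= -(big_mkord predT (fun t => if (c %| t)%N then 1%N else 0%N)).
rewrite divn_count_dvd.
case: q q0 cq => // q _ cq.
rewrite (big_nat_recl _ _ _ (leq0n q)) dvdn0 big_nat_recr //= cq big_add1 /= addnC.
congr (_ + _)%N.
Qed.

Lemma card_dvd_mul (q e : nat) : (0 < q)%N ->
  #|[pred t : 'I_q | (q %| e * t)%N]| = gcdn e q.
Proof.
move=> q0.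
have g0 : (0 < gcdn e q)%N by rewrite gcdn_gt0 q0 orbT.
set g := gcdn e q.
have eg : e = (e %/ g * g)%N by rewrite divnK // dvdn_gcdl.
have qg : q = (q %/ g * g)%N by rewrite divnK // dvdn_gcdr.
have cop : coprime (q %/ g) (e %/ g).
  rewrite coprime_sym /coprime -(@eqn_pmul2r g) // muln_gcdl -eg -qg mul1n //.
transitivity #|[pred t : 'I_q | (q %/ g %| t)%N]|.
  apply: eq_card => t /=; rewrite !inE.
  rewrite {1}qg {1}eg mulnAC dvdn_pmul2r // Gauss_dvdr //.
rewrite card_mult //; last by rewrite dvdn_div ?dvdn_gcdr.
by rewrite divnA ?dvdn_gcdr // mulKn.
Qed.
Lemma card_ffun_forall (n : nat) (T : finType) (P : 'I_n -> pred T) :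
  #|[set f : {ffun 'I_n -> T} | [forall i, P i (f i)]]| = (\prod_(i < n) #|P i|)%N.
Proof.
have := card_family P; rewrite foldrE big_map big_enum /= => <-.
apply: eq_card => f; rewrite inE.
by apply/forallP/familyP.
Qed.
Local Open Scope ring_scope.

Definition divcol (q n : nat) (v : 'cV[int]_n) := [forall i, (q%:Z %| v i ord0)%Z].

Lemma divcol_mul q m n (P : 'M[int]_(m, n)) v : divcol q v -> divcol q (P *m v).
Proof.
move=> /forallP H; apply/forallP => i; rewrite mxE.
by apply: rpred_sum => j _; apply: dvdz_mull; apply: H.
Qed.

Lemma divcol_unit q n (P : 'M[int]_n) v : P \in unitmx -> divcol q (P *m v) = divcol q v.
Proof.
move=> uP; apply/idP/idP; last exact: divcol_mul.
by move=> /(divcol_mul (invmx P)); rewrite mulKmx.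
Qed.

Lemma divcol_eq q n (a b : 'cV[int]_n) : divcol q (a - b) -> divcol q a = divcol q b.
Proof.
move=> /forallP H; apply: eq_forallb => i.
have := H i; rewrite !mxE => Hi.
have -> : a i 0 = (a i 0 - b i 0) + b i 0 by rewrite subrK.
by rewrite rpredDl.
Qed.

Definition toZ n q (x : {ffun 'I_n -> 'I_q}) : 'cV[int]_n := \col_j ((x j : nat)%:Z).
Definition frZ n q (v : 'cV[int]_n) : {ffun 'I_n -> 'I_q.+1} :=
  [ffun j => inord `|(v j ord0 %% q.+1%:Z)%Z|%N].

Lemma toZ_frZ n q (v : 'cV[int]_n) : divcol q.+1 (toZ (frZ q v) - v).
Proof.
apply/forallP => i; rewrite !mxE ffunE.
have g0 : (0 <= (v i ord0 %% q.+1%:Z)%Z) by rewrite modz_ge0.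
have lt : (`|(v i ord0 %% q.+1%:Z)%Z| < q.+1)%N.
  by rewrite -ltz_nat abszE ger0_norm // ltz_pmod.
rewrite inordK // abszE ger0_norm //.
have {2}-> : v i ord0 = ((v i ord0 %/ q.+1%:Z)%Z * q.+1%:Z + (v i ord0 %% q.+1%:Z)%Z) by rewrite -divz_eq.
rewrite opprD addrCA addrN addr0 rpredN; exact: dvdz_mull.
Qed.

Lemma toZ_inj n q (x y : {ffun 'I_n -> 'I_q}) : divcol q (toZ x - toZ y) -> x = y.
Proof.
move=> /forallP H; apply/ffunP => j; apply: val_inj => /=.
have := H j; rewrite !mxE -eqz_mod_dvd !modz_nat => /eqP [].
by rewrite !modn_small.
Qed.

Lemma divcolD q n (a b : 'cV[int]_n) : divcol q a -> divcol q b -> divcol q (a + b).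
Proof.
move=> /forallP Ha /forallP Hb; apply/forallP => i; rewrite mxE; exact: rpredD.
Qed.

Lemma divcolN q n (a : 'cV[int]_n) : divcol q (- a) = divcol q a.
Proof. by apply: eq_forallb => i; rewrite mxE rpredN. Qed.

Definition Dm m l (d : seq int) : 'M[int]_(m, l) := \matrix_(i, j) (d`_i *+ (i == j :> nat)).

Lemma Dm_entry m l (d : seq int) (v : 'cV[int]_l) (i : 'I_m) (j : 'I_l) :
  (i : nat) = j -> (Dm m l d *m v) i 0 = d`_i * v j 0.
Proof.
move=> ij; rewrite mxE (bigD1 j) //= big1 ?addr0.
  by rewrite mxE ij eqxx mulr1n.
move=> k kj; rewrite mxE ij.
have -> : ((j : nat) == k) = false by apply/negbTE; apply: contra kj => /eqP h; apply/eqP/val_inj.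
by rewrite mulr0n mul0r.
Qed.

Lemma Dm_entry0 m l (d : seq int) (v : 'cV[int]_l) (i : 'I_m) :
  (l <= i)%N -> (Dm m l d *m v) i 0 = 0.
Proof.
move=> li; rewrite mxE big1 // => k _; rewrite mxE.
have -> : ((i : nat) == k) = false by apply/negbTE; apply/eqP => h; move: (ltn_ord k); rewrite -h; lia.
by rewrite mulr0n mul0r.
Qed.

Lemma Dm_cond q m l (d : seq int) (y : {ffun 'I_l -> 'I_q}) :
  divcol q (Dm m l d *m toZ y) =
  [forall j : 'I_l, (q%:Z %| (take (minn m l) d)`_j * (y j : nat)%:Z)%Z].
Proof.
apply/forallP/forallP => H j.
  case: (ltnP j m) => jm.
    have := H (Ordinal jm); rewrite (Dm_entry _ _ (j := j)) //= mxE nth_take //.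
    by rewrite leq_min jm ltn_ord.
  rewrite nth_default ?mul0r ?dvdz0 //.
  rewrite size_take; case: ifP => [_|/negbT]; first exact: leq_trans (geq_minl m l) jm.
  by rewrite -leqNgt => h; apply: leq_trans h (leq_trans (geq_minl m l) jm).
case: (ltnP j l) => jl.
  have := H (Ordinal jl); rewrite (Dm_entry _ _ (j := Ordinal jl)) //= mxE nth_take //.
  by rewrite leq_min jl ltn_ord.
by rewrite Dm_entry0 // dvdz0.
Qed.

Lemma count_smith m l q (M : 'M[int]_(m,l)) (L : 'M[int]_m) (R : 'M[int]_l) (d : seq int) :
  L \in unitmx -> R \in unitmx -> M = L *m Dm m l d *m R ->
  #|[set x : {ffun 'I_l -> 'I_q.+1} | divcol q.+1 (M *m toZ x)]| =
  (\prod_(j < l) gcdn `|((take (minn m l) d)`_j)%R|%N q.+1)%N.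
Proof.
move=> uL uR EM.
pose psi (x : {ffun 'I_l -> 'I_q.+1}) := frZ q (R *m toZ x).
have Hc : forall x, divcol q.+1 (M *m toZ x) = divcol q.+1 (Dm m l d *m toZ (psi x)).
  move=> x; rewrite EM -!mulmxA divcol_unit //; apply/esym/divcol_eq.
  rewrite -mulmxBr; apply: divcol_mul; exact: toZ_frZ.
have inj : injective psi.
  move=> x y Exy; apply: toZ_inj; rewrite -(divcol_unit _ _ uR) mulmxBr.
  have -> : R *m toZ x - R *m toZ y =
     - (toZ (psi x) - R *m toZ x) + (toZ (psi y) - R *m toZ y) by rewrite Exy opprB addrA subrK.
  by apply: divcolD; rewrite ?divcolN; apply: toZ_frZ.
transitivity #|psi @^-1: [set y | divcol q.+1 (Dm m l d *m toZ y)]|.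
  by apply: eq_card => x; rewrite !inE Hc.
rewrite card_preimset //.
pose P := fun (j : 'I_l) (t : 'I_q.+1) =>
   (q.+1%:Z %| ((take (minn m l) d)`_j * (t : nat)%:Z)%R)%Z.
transitivity #|[set f : {ffun 'I_l -> 'I_q.+1} | [forall i, P i (f i)]]|.
  by apply: eq_card => y; rewrite !inE Dm_cond.
rewrite card_ffun_forall; apply: eq_bigr => j _.
rewrite -card_dvd_mul //; apply: eq_card => t; rewrite !inE /=.
by rewrite /P unfold_in /= dvdzE abszM.
Qed.
Lemma zero_tail (s : seq int) : path dvdz 0 s -> forall j, s`_j = 0.
Proof.
elim: s => [|y s IH] /=; first by move=> _ j; rewrite nth_nil.
move=> /andP [y0 ps]; have /eqP y00 : y == 0 by rewrite -dvd0z.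
rewrite y00 in ps; move=> [|j] //=; exact: IH.
Qed.

Definition torf (t : seq int) : seq nat := [seq `|x|%N | x <- t & x != 0].

Lemma prod_split (t : seq int) (l q : nat) : sorted dvdz t -> (size t <= l)%N ->
  (\prod_(j < l) gcdn `|(t`_j)%R|%N q)%N = (q ^ (l - size (torf t)) * \prod_(x <- torf t) gcdn x q)%N.
Proof.
elim: t l => [|x t IH] l st sl.
  rewrite /torf /= big_nil muln1 subn0.
  under eq_bigr => j _ do rewrite nth_nil /= gcd0n.
  by rewrite prod_nat_const card_ord.
case: l sl => // l sl; rewrite big_ord_recl /=.
have pt : sorted dvdz t by apply: (path_sorted st).
case: (eqVneq x 0) => [x0|x0].
  rewrite x0 in st *.
  have zt := zero_tail st.
  rewrite /torf /=.
  have -> : [seq `|x|%N | x <- t & x != 0] = [::].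
    apply/eqP; rewrite -size_eq0 size_map size_filter -leqn0 leqNgt -has_count.
    apply/hasPn => y /(nthP 0) [j _ <-]; by rewrite zt eqxx.
  rewrite big_nil muln1 subn0 gcd0n.
  under eq_bigr => j _ do rewrite add0n zt /= gcd0n.
  by rewrite prod_nat_const card_ord expnS.
rewrite /torf /= x0 /= big_cons.
under eq_bigr => j _ do rewrite add0n.
rewrite (IH l pt sl) /torf subSS.
by rewrite mulnCA.
Qed.

Lemma nz_char (t : seq int) : sorted dvdz t -> forall j, (t`_j != 0) = (j < size (torf t))%N.
Proof.
elim: t => [|x t IH] st j; first by rewrite nth_nil.
have pt : sorted dvdz t by apply: (path_sorted st).
case: (eqVneq x 0) => [x0|x0].
  rewrite x0 in st *.
  have zt := zero_tail st.
  rewrite /torf /=.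
  have -> : [seq `|x|%N | x <- t & x != 0] = [::].
    apply/eqP; rewrite -size_eq0 size_map size_filter -leqn0 leqNgt -has_count.
    apply/hasPn => y /(nthP 0) [i _ <-]; by rewrite zt eqxx.
  by case: j => [|j] /=; rewrite ?eqxx ?zt ?eqxx.
rewrite /torf /= x0 /=; case: j => [|j] //=.
by rewrite IH.
Qed.

Lemma rank_unitl m n (P : 'M[rat]_m) (V : 'M[rat]_(m, n)) : P \in unitmx -> \rank (P *m V) = \rank V.
Proof. move=> uP; apply/eqmx_rank/eqmxMunitP; by exists P. Qed.

Lemma rank_unitr m n (P : 'M[rat]_n) (V : 'M[rat]_(m, n)) : P \in unitmx -> \rank (V *m P) = \rank V.
Proof. by move=> uP; rewrite mxrankMfree // row_free_unit. Qed.

Lemma map_unit n (L : 'M[int]_n) : L \in unitmx -> map_mx (intr : int -> rat) L \in unitmx.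
Proof. by rewrite !unitmxE det_map_mx; apply: rmorph_unit. Qed.
Lemma prod_ind (I : finType) (B : {pred I}) (b : I -> bool) :
  \prod_(i in B) ((b i)%:R : int) = ([forall i in B, b i])%:R.
Proof.
case: forallP => [H|/forallP]; first by apply: big1 => i iB; have := H i; rewrite iB /= => ->.
rewrite negb_forall => /existsP [i]; rewrite negb_imply => /andP [iB /negbTE bi].
by rewrite (bigD1 i) //= bi mul0r.
Qed.

Definition Pdiv l (a : 'rV[int]_l) q (x : {ffun 'I_l -> 'I_q}) : bool :=
  (q%:Z %| \sum_(i < l) a 0 i * (x i : nat)%:Z)%Z.
Definition NS l (A : seq 'rV[int]_l) q (S : {set 'I_(size A)}) : nat :=
  #|[set x : {ffun 'I_l -> 'I_q} | [forall i in S, Pdiv (nth 0 A i) x]]|.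
Arguments NS {l} A q S.

Lemma card_sum (T : finType) (C : pred T) : (#|[set x | C x]|)%:Z = \sum_x ((C x)%:R : int).
Proof.
rewrite -sum1_card -natz natr_sum big_mkcond /=; apply: eq_bigr => x _; rewrite inE.
by case: (C x).
Qed.

Lemma one_minus (b : bool) : ((~~ b)%:R : int) = - (b%:R) + 1.
Proof. by case: b; rewrite ?subrr ?oppr0 ?add0r. Qed.

Lemma IE l (A : seq 'rV[int]_l) q :
  (Mcount A q)%:Z = \sum_(S : {set 'I_(size A)}) (-1)^+#|S| * (NS A q S)%:Z.
Proof.
rewrite /Mcount card_sum.
have E : forall x : {ffun 'I_l -> 'I_q},
  ((all (fun a : 'rV[int]_l => ~~ (q%:Z %| \sum_(i < l) a 0 i * (x i : nat)%:Z)%Z) A)%:R : int)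
  = \sum_(S : {set 'I_(size A)}) (-1)^+#|S| * ([forall i in S, Pdiv (nth 0 A i) x])%:R.
  move=> x.
  have -> : all (fun a : 'rV[int]_l => ~~ (q%:Z %| \sum_(i < l) a 0 i * (x i : nat)%:Z)%Z) A
     = [forall i : 'I_(size A), ~~ Pdiv (nth 0 A i) x].
    apply/(all_nthP 0)/forallP => [H i|H i iA]; first exact: H.
    exact: (H (Ordinal iA)).
  have -> : (([forall i : 'I_(size A), ~~ Pdiv (nth 0 A i) x])%:R : int) =
     \prod_(i : 'I_(size A)) ((~~ Pdiv (nth 0 A i) x)%:R : int) by rewrite prod_ind.
  under eq_bigr => i _ do rewrite one_minus.
  rewrite bigA_distr; apply: eq_bigr => S _.
  rewrite -big_mkcond /= prodrN prod_ind //.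
rewrite (eq_bigr _ (fun x _ => E x)) exchange_big /=; apply: eq_bigr => S _.
by rewrite -mulr_sumr /NS card_sum.
Qed.

Lemma rank_Dm m l (d : seq int) : sorted dvdz d ->
  \rank (map_mx (intr : int -> rat) (Dm m l d)) = size (torf (take (minn m l) d)).
Proof.
move=> sd.
set t := take (minn m l) d.
have st : sorted dvdz t by apply: take_sorted.
set r := size (torf t).
have rt : (r <= size t)%N by rewrite /r /torf size_map size_filter count_size.
have tm : (size t <= minn m l)%N by rewrite size_take; case: ifP => // /negbT; rewrite -leqNgt.
have rm : (r <= m)%N by apply: (leq_trans rt); apply: (leq_trans tm); apply: geq_minl.
have rl : (r <= l)%N by apply: (leq_trans rt); apply: (leq_trans tm); apply: geq_minr.
have td : forall j, (j < minn m l)%N -> t`_j = d`_j by move=> j jm; rewrite nth_take.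
pose w : 'rV[rat]_l := \row_j (if (j < r)%N then (d`_j)%:~R else 1).
have E : map_mx (intr : int -> rat) (Dm m l d) = pid_mx r *m diag_mx w.
  apply/matrixP => i j; rewrite mul_mx_diag !mxE.
  case: (eqVneq (i : nat) j) => [ij|ij]; last first.
    by rewrite mulr0n mul0r.
  rewrite mulr1n /= ij.
  have jm : (j < minn m l)%N by rewrite leq_min -{1}ij !ltn_ord.
  case: ifP => jr; first by rewrite mul1r.
  rewrite mul0r; apply/eqP; rewrite intr_eq0 -(td _ jm); apply/negPn.
  by rewrite nz_char // jr.
rewrite E rank_unitr ?rank_pid_mx //.
rewrite unitmxE det_diag unitfE; apply/prodf_neq0 => j _; rewrite mxE.
case: ifP => jr; last exact: oner_neq0.
rewrite intr_eq0 -td; last by apply: (leq_trans jr); apply: (leq_trans rt).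
by rewrite nz_char.
Qed.

Lemma mS_prod l (A : seq 'rV[int]_l) S k : (0 < k)%N ->
  mS A S k = (\prod_(x <- tor_inv A S) gcdn x k)%N.
Proof.
move=> k0; rewrite /mS.
set d := tor_inv A S.
rewrite (card_ffun_forall (fun (i : 'I_(size d)) (t : 'I_k) => (k %| nth 0%N d i * t)%N)).
rewrite (big_nth 0%N) big_mkord; apply: eq_bigr => i _.
by rewrite -card_dvd_mul.
Qed.

Lemma smith_spec m n (M : 'M[int]_(m,n)) : exists L R,
  [/\ L \in unitmx, R \in unitmx, sorted dvdz (smith_diag M) &
      M = L *m Dm m n (smith_diag M) *m R].
Proof.
rewrite /smith_diag; case: int_Smith_normal_form => L uL [R uR [d sd EM]] /=.
by exists L, R.
Qed.

Lemma cond_subA l (A : seq 'rV[int]_l) q (S : {set 'I_(size A)}) (x : {ffun 'I_l -> 'I_q}) :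
  [forall i in S, Pdiv (nth 0 A i) x] = divcol q (subA A S *m toZ x).
Proof.
apply: eq_forallb => i; rewrite mxE.
under eq_bigr => j _ do rewrite !mxE.
case: (i \in S) => /=; last by rewrite big1 ?dvdz0 // => j _; rewrite mul0r.
by [].
Qed.

Lemma NS_formula l (A : seq 'rV[int]_l) q S :
  NS A q.+1 S = (q.+1 ^ (l - rankS A S) * \prod_(x <- tor_inv A S) gcdn x q.+1)%N.
Proof.
have [L [R [uL uR sd EM]]] := smith_spec (subA A S).
rewrite /NS.
rewrite (eq_card (B := [set x : {ffun 'I_l -> 'I_q.+1} | divcol q.+1 (subA A S *m toZ x)])); last by move=> x; rewrite !inE cond_subA.
rewrite (count_smith q uL uR EM).
rewrite prod_split; last first.
- rewrite size_take; case: ifP => [_|/negbT]; first exact: geq_minr.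
  by rewrite -leqNgt => h; apply: (leq_trans h); apply: geq_minr.
- exact: take_sorted.
have -> : rankS A S = size (torf (take (minn (size A) l) (smith_diag (subA A S)))).
  rewrite /rankS.
  have -> : map_mx (intr : int -> rat) (subA A S) =
    map_mx intr L *m map_mx intr (Dm (size A) l (smith_diag (subA A S))) *m map_mx intr R.
    by rewrite -!map_mxM -EM.
  by rewrite rank_unitr ?map_unit // rank_unitl ?map_unit // rank_Dm.
by [].
Qed.

Lemma path_last_dvd (y : nat) (s : seq nat) : path dvdn y s ->
  forall x, x \in y :: s -> (x %| last y s)%N.
Proof.
elim: s y => [|z s IH] y /=; first by move=> _ x; rewrite inE => /eqP ->.
move=> /andP [yz ps] x; rewrite inE => /orP [/eqP ->|xs].
  by apply: dvdn_trans yz (IH _ ps z (mem_head _ _)).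
exact: IH.
Qed.

Lemma tor_dvd l (A : seq 'rV[int]_l) S x : x \in tor_inv A S -> (x %| rhoA A)%N.
Proof.
move=> xt.
have [L [R [uL uR sd EM]]] := smith_spec (subA A S).
have st : sorted dvdn (tor_inv A S).
  rewrite /tor_inv sorted_map.
  apply: sorted_filter; first by move=> a b c; apply: dvdn_trans.
  exact: take_sorted.
apply: (@dvdn_trans (last 1%N (tor_inv A S))); last exact: (biglcmn_sup S).
move: st xt; case: (tor_inv A S) => // y s /= ps.
exact: path_last_dvd.
Qed.

Lemma rho_gt0 l (A : seq 'rV[int]_l) : (0 < rhoA A)%N.
Proof.
rewrite /rhoA; apply: (big_ind (fun n => 0 < n)%N) => //.
  by move=> a b a0 b0; rewrite lcmn_gt0 a0 b0.
move=> S _.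
have : forall x, x \in tor_inv A S -> (0 < x)%N.
  move=> x; rewrite /tor_inv => /mapP [y]; rewrite mem_filter => /andP [y0 _] ->.
  by rewrite absz_gt0.
case: (tor_inv A S) => // y s H /=.
by apply: H; rewrite mem_last.
Qed.

Lemma part1 l (A : seq 'rV[int]_l) (k : nat) : (0 < k)%N -> (k %| rhoA A)%N ->
  forall q : nat, (0 < q)%N -> q = k %[mod rhoA A] ->
     ((Mcount A q)%:Z = (chiA A k).[q%:Z])%R.
Proof.
move=> k0 krho [//|q] _ qk.
rewrite IE /chiA horner_sum; apply: eq_bigr => S _.
rewrite hornerZ hornerXn NS_formula mS_prod //.
have -> : (\prod_(x <- tor_inv A S) gcdn x q.+1)%N = (\prod_(x <- tor_inv A S) gcdn x k)%N.
  apply: eq_big_seq => x xt.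
  have xr := tor_dvd xt.
  by rewrite -gcdn_modr -(modn_dvdm _ xr) qk (modn_dvdm _ xr) gcdn_modr.
rewrite PoszM -natz natrX natz -natz.
rewrite -mulrA; congr (_ * _); rewrite mulrC; congr (_ * _).
by rewrite natz. Qed.

Lemma part2 (l : nat) (A : seq 'rV[int]_l) (k : nat) :
  (0 < k)%N -> (k %| rhoA A)%N ->
  forall f : {poly rat},
     (forall q : nat, (0 < q)%N -> q = k %[mod rhoA A] ->
        f.[q%:R] = (Mcount A q)%:R) ->
     f = map_poly (intr : int -> rat) (chiA A k).
Proof.
move=> k0 krho.
move=> f Hf.
have rho0 := rho_gt0 A.
set g := map_poly (intr : int -> rat) (chiA A k).
apply/eqP; rewrite -subr_eq0; apply/eqP.
pose qs := [seq ((k + j * rhoA A)%N)%:R : rat | j <- iota 0 (size (f - g))].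
apply: (@roots_geq_poly_eq0 _ _ qs).
- apply/allP => z /mapP [j _ ->].
  have q0 : (0 < k + j * rhoA A)%N by rewrite addn_gt0 k0.
  have qk : (k + j * rhoA A)%N = k %[mod rhoA A] by rewrite addnC modnMDl.
  rewrite /root hornerD hornerN Hf //.
  have := part1 k0 krho q0 qk.
  move=> E.
  have -> : (((k + j * rhoA A)%N)%:R : rat) = intr (((k + j * rhoA A)%N)%:Z) by [].
  rewrite /g horner_map /= -E.
  have -> : (intr ((Mcount A (k + j * rhoA A))%:Z) : rat) = (Mcount A (k + j * rhoA A))%:R by [].
  by rewrite subrr.
- rewrite map_inj_uniq ?iota_uniq // => i j /eqP; rewrite eqr_nat => /eqP.
  by move/addnI/eqP; rewrite eqn_pmul2r // => /eqP.
- by rewrite size_map size_iota.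
Qed.

Close Scope ring_scope.
Unset Implicit Arguments.
Set Strict Implicit.

Theorem mainTheorem11 (l : nat) (A : seq 'rV[int]_l) (k : nat) :
  (0 < k)%N -> (k %| rhoA A)%N ->
  (forall q : nat, (0 < q)%N -> q = k %[mod rhoA A] ->
     ((Mcount A q)%:Z = (chiA A k).[q%:Z])%R) /\
  (forall f : {poly rat},
     (forall q : nat, (0 < q)%N -> q = k %[mod rhoA A] ->
        f.[q%:R] = (Mcount A q)%:R) ->
     f = map_poly (intr : int -> rat) (chiA A k))%R.
Proof.
move=> k0 krho; split; [exact: part1 | exact: part2].
Qed.
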